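(* Let $A$ be a local integral domain and let $\mathfrak{p}$ be a prime ideal of $A$ such that $A$ is straight at $\mathfrak{p}$. Then: (i) if $b\in\mathfrak{p}A_\mathfrak{p}$, then $b\in\mathfrak{p}A[b]$; (ii) $A$ is integrally closed in the ring $A+\mathfrak{p}A_\mathfrak{p}$.
   Context: All rings are commutative with identity. An overring of a domain $A$ is a ring $B$ with $A\subseteq B\subseteq \operatorname{Frac}(A)$. A domain $A$ is straight at a prime ideal $\mathfrak{p}$ if for every overring $B$ of $A$, the $(A/\mathfrak{p})$-module $B/\mathfrak{p}B$ is torsion-free. Here $A_\mathfrak{p}$ denotes the localization of $A$ at $\mathfrak{p}$, viewed inside $\operatorname{Frac}(A)$, and $A+\mathfrak{p}A_\mathfrak{p}$ is the subring of $\operatorname{Frac}(A)$ consisting of sums of an element of $A$ and an element of $\mathfrak{p}A_\mathfrak{p}$. *)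

(* Defs.v *)
From HB Require Import structures.
From mathcomp Require Import all_boot all_order all_algebra.
From mathcomp Require Import fraction.
Set Implicit Arguments. Unset Strict Implicit. Unset Printing Implicit Defensive.
Import Order.TTheory GRing.Theory Num.Theory.
Local Open Scope ring_scope.

Section Defs.
Variable A : idomainType.

Definition K := {fraction A}.
Definition emb (a : A) : K := @FracField.tofrac A a.

Definition is_ideal (I : A -> Prop) : Prop :=
  I 0 /\ (forall x y, I x -> I y -> I (x + y)) /\ (forall a x, I x -> I (a * x)).
Definition proper_ideal (I : A -> Prop) : Prop := is_ideal I /\ ~ I 1.
Definition prime_ideal (I : A -> Prop) : Prop :=
  proper_ideal I /\ (forall x y, I (x * y) -> I x \/ I y).
Definition maximal_ideal (I : A -> Prop) : Prop :=
  proper_ideal I /\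
  (forall J, proper_ideal J -> (forall x, I x -> J x) -> forall x, J x <-> I x).
Definition local_ring : Prop :=
  exists m, maximal_ideal m /\ forall m', maximal_ideal m' -> forall x, m' x <-> m x.

Definition subring (B : K -> Prop) : Prop :=
  B 0 /\ B 1 /\ (forall x y, B x -> B y -> B (x - y)) /\
  (forall x y, B x -> B y -> B (x * y)).
Definition overring (B : K -> Prop) : Prop :=
  subring B /\ forall a, B (emb a).

Definition ext_ideal (p : A -> Prop) (B : K -> Prop) (x : K) : Prop :=
  exists n (s : 'I_n -> A) (t : 'I_n -> K),
    (forall i, p (s i)) /\ (forall i, B (t i)) /\ x = \sum_(i < n) emb (s i) * t i.

(* A straight at p: for every overring B, the (A/p)-module B/pB is torsion-free,
   i.e. for a in A with a mod p <> 0 and b in B, a.(b mod pB) = 0 implies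
   b mod pB = 0. *)
Definition straight_at (p : A -> Prop) : Prop :=
  forall B, overring B ->
    forall (a : A) (b : K), ~ p a -> B b -> ext_ideal p B (emb a * b) -> ext_ideal p B b.

Definition localization (p : A -> Prop) (x : K) : Prop :=
  exists a s : A, ~ p s /\ x = emb a / emb s.

Definition adjoin (b : K) (x : K) : Prop :=
  exists q : {poly A}, x = (map_poly emb q).[b].

Definition A_plus (p : A -> Prop) (x : K) : Prop :=
  exists a y, ext_ideal p (localization p) y /\ x = emb a + y.

Definition integral_over_A (x : K) : Prop :=
  exists q : {poly A}, q \is monic /\ (map_poly emb q).[x] = 0.
End Defs.

(* Main.v *)
Require Import Defs.
From HB Require Import structures.
From mathcomp Require Import all_boot all_order all_algebra.
From mathcomp Require Import fraction.
From mathcomp Require Import ring.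
From mathcomp Require boolp classical_sets.
From Stdlib Require Import Classical_Prop.
Set Implicit Arguments. Unset Strict Implicit. Unset Printing Implicit Defensive.
Import GRing.Theory.
Local Open Scope ring_scope.

Lemma embD (A : idomainType) (x y : A) : emb (x + y) = emb x + emb y.
Proof. exact: rmorphD. Qed.
Lemma embM (A : idomainType) (x y : A) : emb (x * y) = emb x * emb y.
Proof. exact: rmorphM. Qed.
Lemma embB (A : idomainType) (x y : A) : emb (x - y) = emb x - emb y.
Proof. exact: rmorphB. Qed.
Lemma embN (A : idomainType) (x : A) : emb (- x) = - emb x.
Proof. exact: rmorphN. Qed.
Lemma emb0 (A : idomainType) : emb (0 : A) = 0.
Proof. exact: rmorph0. Qed.
Lemma emb1 (A : idomainType) : emb (1 : A) = 1.
Proof. exact: rmorph1. Qed.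
Lemma emb_inj (A : idomainType) (x y : A) : emb x = emb y -> x = y.
Proof. by move=> /eqP; rewrite /emb tofrac_eq => /eqP. Qed.
Lemma mapE (A : idomainType) (q : {poly A}) :
  map_poly (@emb A) q = map_poly (@tofrac A) q.
Proof. by []. Qed.

Lemma adjoin_over (A : idomainType) (b : K A) : overring (adjoin b).
Proof.
split; last by move=> a; exists a%:P; rewrite mapE map_polyC hornerC.
split; first by exists 0; rewrite mapE rmorph0 horner0.
split; first by exists 1; rewrite mapE rmorph1 hornerC.
split.
  by move=> x y [q1 ->] [q2 ->]; exists (q1 - q2); rewrite !mapE rmorphB hornerD hornerN.
by move=> x y [q1 ->] [q2 ->]; exists (q1 * q2); rewrite !mapE rmorphM hornerM.
Qed.

Lemma max_ideal_ex (A : idomainType) (I : A -> Prop) :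
  Defs.proper_ideal I -> exists M, maximal_ideal M /\ forall x, I x -> M x.
Proof.
move=> PI.
pose T := {J : A -> Prop | Defs.proper_ideal J /\ (forall x, I x -> J x)}.
pose R (s t : T) := boolp.asbool (forall x, sval s x -> sval t x).
have t0 : T by exists I.
have [|||t tmax] := @classical_sets.ZL_preorder T t0 R.
- by move=> s; apply/boolp.asboolP.
- by move=> r s t /boolp.asboolP H1 /boolp.asboolP H2; apply/boolp.asboolP => x /H1 /H2.
- move=> C Ctot.
  pose U x := I x \/ exists s, C s /\ sval s x.
  have UI : Defs.proper_ideal U /\ (forall x, I x -> U x).
    case: PI => [[I0 [ID IM]] I1].
    split; last by move=> x; left.
    split; last first.
      move=> [//|[s [_ s1]]]; by case: (svalP s) => [[_ H] _]; apply: H.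
    split; first by left.
    split; last first.
      move=> a x [Ix|[s [Cs sx]]]; first by left; apply: IM.
      right; exists s; split=> //; case: (svalP s) => [[[_ [_ H]] _] _]; exact: H.
    move=> x y [Ix|[s [Cs sx]]] [Iy|[s' [Cs' sy]]].
    + by left; apply: ID.
    + right; exists s'; split=> //; case: (svalP s') => [[[_ [H _]] _] HI]; apply: H => //; exact: HI.
    + right; exists s; split=> //; case: (svalP s) => [[[_ [H _]] _] HI]; apply: H => //; exact: HI.
    + have [/boolp.asboolP H|/boolp.asboolP H] := Ctot s s' Cs Cs'.
      * right; exists s'; split=> //; case: (svalP s') => [[[_ [H' _]] _] _]; apply: H' => //; exact: H.
      * right; exists s; split=> //; case: (svalP s) => [[[_ [H' _]] _] _]; apply: H' => //; exact: H.
  exists (exist _ U UI) => s Cs; apply/boolp.asboolP => x sx /=; right; exists s; by split.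
exists (sval t); split; last by case: (svalP t).
split; first by case: (svalP t).
move=> J PJ tJ.
have JT : Defs.proper_ideal J /\ (forall x, I x -> J x).
  by split=> // x Ix; apply: tJ; case: (svalP t) => _; apply.
have := tmax (exist _ J JT) (boolp.asboolT tJ) => /boolp.asboolP /= Jt.
by move=> x; split; [apply: Jt | apply: tJ].
Qed.

Lemma unit_1p (A : idomainType) (p : A -> Prop) :
  local_ring A -> prime_ideal p -> forall c, p c -> exists e, e * (1 - c) = 1.
Proof.
move=> [m [mmax muniq]] [pprop _] c pc.
apply: NNPP => Hne.
pose J x := exists r, x = r * (1 - c).
have PJ : Defs.proper_ideal J.
  split.
    split; first by exists 0; rewrite mul0r.
    split; first by move=> x y [r1 ->] [r2 ->]; exists (r1 + r2); rewrite mulrDl.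
    by move=> a x [r ->]; exists (a * r); rewrite mulrA.
  by move=> [r Hr]; apply: Hne; exists r.
have [M1 [M1max JM1]] := max_ideal_ex PJ.
have [M2 [M2max pM2]] := max_ideal_ex pprop.
have m1 : m (1 - c) by apply/(muniq _ M1max); apply: JM1; exists 1; rewrite mul1r.
have m2 : m c by apply/(muniq _ M2max); apply: pM2.
case: mmax => [[[_ [mD _]] m1n] _]; apply: m1n.
by have := mD _ _ m1 m2; rewrite subrK.
Qed.

Definition comb (A : idomainType) (P : A -> Prop) (v : seq (K A)) (x : K A) : Prop :=
  exists g : nat -> A, (forall i, P (g i)) /\ x = \sum_(i < size v) emb (g i) * v`_i.

Lemma comb0 (A : idomainType) (P : A -> Prop) (v : seq (K A)) : P 0 -> comb P v 0.
Proof.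
move=> P0; exists (fun _ => 0); split=> //.
by rewrite big1 // => i _; rewrite emb0 mul0r.
Qed.

Lemma combD (A : idomainType) (P : A -> Prop) (v : seq (K A)) x y :
  (forall a b, P a -> P b -> P (a + b)) -> comb P v x -> comb P v y -> comb P v (x + y).
Proof.
move=> HD [g [Pg ->]] [h [Ph ->]]; exists (fun i => g i + h i); split.
  by move=> i; apply: HD.
by rewrite -big_split; apply: eq_bigr => i _; rewrite embD mulrDl.
Qed.

Lemma combZ (A : idomainType) (P : A -> Prop) (v : seq (K A)) a x :
  (forall a b, P b -> P (a * b)) -> comb P v x -> comb P v (emb a * x).
Proof.
move=> HM [g [Pg ->]]; exists (fun i => a * g i); split; first by move=> i; apply: HM.
by rewrite mulr_sumr; apply: eq_bigr => i _; rewrite embM mulrA.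
Qed.

Lemma comb_sum (A : idomainType) (P : A -> Prop) (v : seq (K A)) n (F : 'I_n -> K A) :
  is_ideal P -> (forall i, comb P v (F i)) -> comb P v (\sum_(i < n) F i).
Proof.
move=> [P0 [PD PM]] HF; apply: (big_ind (comb P v)) => //.
- exact: comb0.
- by move=> x y; apply: combD.
Qed.

Lemma comb_mem (A : idomainType) (P : A -> Prop) (v : seq (K A)) c (i : nat) :
  P c -> P 0 -> (i < size v)%N -> comb P v (emb c * v`_i).
Proof.
move=> Pc P0 Hi; exists (fun j => if j == i then c else 0); split.
  by move=> j; case: ifP.
rewrite (bigD1 (Ordinal Hi)) //= eqxx big1 ?addr0 // => j Hj.
have -> : (nat_of_ord j == i) = false.
  apply/negbTE; apply: contra Hj => /eqP Hji; apply/eqP; exact: val_inj.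
by rewrite emb0 mul0r.
Qed.

Lemma comb_weak (A : idomainType) (P Q : A -> Prop) (v : seq (K A)) x :
  (forall a, P a -> Q a) -> comb P v x -> comb Q v x.
Proof. by move=> H [g [Pg ->]]; exists g; split=> // i; apply: H. Qed.

Lemma comb_scale (A : idomainType) (P : A -> Prop) (v : seq (K A)) c x :
  is_ideal P -> P c -> comb (fun _ => True) v x -> comb P v (emb c * x).
Proof.
move=> [_ [_ PM]] Pc [g [_ ->]]; exists (fun i => g i * c); split.
  by move=> i; apply: PM.
by rewrite mulr_sumr; apply: eq_bigr => i _; rewrite embM mulrA (mulrC (emb c)).
Qed.

Lemma comb_cons (A : idomainType) (P : A -> Prop) (w : K A) v x :
  comb P (w :: v) x -> exists c, P c /\ comb P v (x - emb c * w).
Proof.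
move=> [g [Pg ->]]; exists (g 0%N); split=> //; exists (fun i => g i.+1); split=> //.
rewrite big_ord_recl /= addrAC subrr add0r.
by apply: eq_bigr => i _.
Qed.

Lemma comb_inA (A : idomainType) (P : A -> Prop) (v : seq (K A)) x :
  (forall w, w \in v -> exists a, w = emb a) -> comb P v x -> exists a, x = emb a.
Proof.
move=> Hv [g [_ ->]].
apply: (big_ind (fun z => exists a, z = emb a)).
- by exists 0; rewrite emb0.
- by move=> x1 x2 [a1 ->] [a2 ->]; exists (a1 + a2); rewrite embD.
- move=> i _; have [b ->] := Hv _ (mem_nth 0 (ltn_ord i)).
  by exists (g i * b); rewrite embM.
Qed.

Lemma nak (A : idomainType) (p : A -> Prop) (v : seq (K A)) :
  (forall c, p c -> exists e, e * (1 - c) = 1) -> is_ideal p ->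
  (forall w, w \in v -> exists a, comb p v (w - emb a)) ->
  forall w, w \in v -> exists a, w = emb a.
Proof.
move=> Hunit Hid; have [p0 [pD pM]] := Hid.
elim: v => [|w0 v IH] H //.
have [a Ha] := H w0 (mem_head _ _).
have [c [pc Hc]] := comb_cons Ha.
have [e He] := Hunit c pc.
have H0 : comb p v (w0 - emb (e * a)).
  have -> : w0 - emb (e * a) = emb e * (w0 - emb a - emb c * w0).
    have He' : emb e * (1 - emb c) = 1 by rewrite -emb1 -embB -embM He.
    rewrite embM; transitivity ((emb e * (1 - emb c)) * w0 - emb e * emb a).
      by rewrite He' mul1r.
    ring.
  exact: combZ.
have Hv : forall w, w \in v -> exists a, w = emb a.
  apply: IH => w wv.
  have wv' : w \in w0 :: v by rewrite inE wv orbT.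
  have [a' Ha'] := H w wv'.
  have [c' [pc' Hc']] := comb_cons Ha'.
  exists (a' + c' * (e * a)).
  have := combD pD Hc' (combZ c' pM H0).
  have -> : w - emb a' - emb c' * w0 + emb c' * (w0 - emb (e * a)) =
            w - emb (a' + c' * (e * a)) by rewrite embD (embM c'); ring.
  by [].
move=> w; rewrite inE => /orP [/eqP -> | /Hv //].
have [b Hb] := comb_inA Hv H0.
by exists (e * a + b); rewrite embD -Hb; ring.
Qed.

Lemma loc_form (A : idomainType) (p : A -> Prop) (y : K A) :
  prime_ideal p -> ext_ideal p (localization p) y ->
  exists c s, p c /\ ~ p s /\ emb s * y = emb c.
Proof.
move=> [[[p0 [pD pM]] p1n] pprime] [n [s [t [ps [Lt ->]]]]].
apply: (big_ind (fun z => exists c s, p c /\ ~ p s /\ emb s * z = emb c)).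
- by exists 0, 1; split=> //; split=> //; rewrite mulr0 emb0.
- move=> z1 z2 [c1 [s1 [pc1 [ps1 H1]]]] [c2 [s2 [pc2 [ps2 H2]]]].
  exists (s2 * c1 + s1 * c2), (s1 * s2); split.
    by apply: pD; apply: pM.
  split; first by move=> /pprime [].
  by rewrite embD !embM -H1 -H2; ring.
- move=> i _; have [a [s' [ps' ->]]] := Lt i.
  exists (s i * a), s'; split; first by rewrite mulrC; apply: pM.
  split=> //.
  have s'0 : emb s' != 0.
    by rewrite /emb tofrac_eq0; apply/eqP => E; apply: ps'; rewrite E.
  transitivity (emb (s i) * emb a * (emb s' * (emb s')^-1)); first by ring.
  by rewrite mulfV // mulr1 embM.
Qed.

Lemma ideal_True (A : idomainType) : is_ideal (fun _ : A => True).
Proof. by []. Qed.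

Theorem lemma2p2 (A : idomainType) (p : A -> Prop) :
  local_ring A -> prime_ideal p -> straight_at p ->
  (forall b : K A, ext_ideal p (localization p) b -> ext_ideal p (adjoin b) b) /\
  (forall x : K A, A_plus p x -> integral_over_A x -> exists a : A, x = emb a).
Proof.
move=> Hloc Hpr Hst.
have Hid : is_ideal p by case: Hpr => [[]].
have [p0 [pD pM]] := Hid.
have Hunit := unit_1p Hloc Hpr.
have one_in : forall b : K A, adjoin b 1 by move=> b; exists 1; rewrite mapE rmorph1 hornerC.
split.
  move=> b Hb; have [c [s [pc [ps Hs]]]] := loc_form Hpr Hb.
  apply: (Hst (adjoin b) (adjoin_over b) s b ps).
    by exists 'X; rewrite mapE map_polyX hornerX.
  exists 1%N, (fun _ => c), (fun _ => 1); split=> //; split=> //.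
  by rewrite big_ord1 mulr1 Hs.
move=> x [a0 [y0 [Hy0 Hx]]] [f [fmon fx]].
have [c [s [pc [ps Hs]]]] := loc_form Hpr Hy0.
have Hy0B : ext_ideal p (adjoin x) y0.
  apply: (Hst (adjoin x) (adjoin_over x) s y0 ps).
    exists ('X - a0%:P); rewrite mapE rmorphB /= map_polyX map_polyC.
    rewrite hornerD hornerN hornerX hornerC Hx /emb; ring.
  exists 1%N, (fun _ => c), (fun _ => 1); split=> //; split=> //.
  by rewrite big_ord1 mulr1 Hs.
pose n := (size f).-1.
have sf : size f = n.+1.
  rewrite /n prednK // lt0n size_poly_eq0; exact: monic_neq0.
have key : x ^+ n = - \sum_(i < n) emb f`_i * x ^+ i.
  move: fx; rewrite horner_coef (size_map_inj_poly (@emb_inj A) (emb0 A)) sf.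
  rewrite big_ord_recr /= !coef_map_id0 ?emb0 //.
  have -> : f`_n = 1 by move/monicP: fmon; rewrite lead_coefE sf.
  rewrite emb1 mul1r => /eqP; rewrite addrC addr_eq0 => /eqP ->.
  by apply: congr1; apply: eq_bigr => i _; rewrite coef_map_id0 ?emb0.
case En : n key => [|m] key.
  by move: key; rewrite expr0 big_ord0 oppr0 => /eqP; rewrite oner_eq0.
pose v := mkseq (fun i => x ^+ i.+1) m.
pose u := (1 : K A) :: v.
have su : size u = m.+1 by rewrite /= size_mkseq.
have Hu : forall i, (i < m.+1)%N -> u`_i = x ^+ i.
  by case=> [|i] //= Hi; rewrite nth_mkseq.
have Hxn : comb (fun _ => True) u (x ^+ m.+1).
  rewrite key; have -> : forall z : K A, - z = emb (-1) * z by move=> z; rewrite embN emb1 mulN1r.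
  apply: combZ => //; apply: comb_sum => // i.
  by rewrite -Hu //; apply: comb_mem => //; rewrite su.
have F1 : forall k, comb (fun _ => True) u (x ^+ k).
  elim=> [|k [g [_ Hg]]].
    by have := comb_mem (P := fun _ => True) (v := u) (c := 1) (i := 0) I I isT; rewrite /= emb1 mulr1.
  rewrite exprS Hg su mulr_sumr; apply: comb_sum => // i.
  rewrite mulrCA; apply: combZ => //; rewrite Hu // -exprS.
  have [lt|eq] := ltnP i.+1 m.+1.
    have lt' : (i.+1 < size u)%N by rewrite su.
    by have := comb_mem (P := fun _ => True) (v := u) (c := 1) I I lt'; rewrite Hu // emb1 mul1r.
  have -> : i.+1 = m.+1 by apply/eqP; rewrite eqn_leq eq ltn_ord.
  exact: Hxn.
have Fpoly : forall q : {poly A}, comb (fun _ => True) u ((map_poly (@emb A) q).[x]).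
  move=> q; rewrite horner_coef; apply: comb_sum => // i.
  by rewrite coef_map_id0 ?emb0 //; apply: combZ.
have Mmul : forall (P : A -> Prop), is_ideal P -> forall j z, comb P u z -> comb P u (x ^+ j * z).
  move=> P HP j z [g [Pg ->]]; rewrite su mulr_sumr; apply: comb_sum => // i.
  rewrite mulrCA Hu // -exprD; apply: comb_scale => //.
have Hy0u : comb p u y0.
  case: Hy0B => [N [cs [ts [pcs [tsB ->]]]]]; apply: comb_sum => // i.
  by case: (tsB i) => q ->; apply: comb_scale.
have F5 : forall k, exists a, comb p u (x ^+ k - emb a).
  elim=> [|k [a Ha]].
    by exists 1; rewrite expr0 emb1 subrr; apply: comb0.
  exists (a * a0).
  have := combD pD (combZ a pM Hy0u) (Mmul p Hid 1%N _ Ha).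
  have Hy : y0 = x - emb a0 by rewrite Hx addrAC subrr add0r.
  rewrite expr1 exprS embM Hy; move: (x ^+ k) => z.
  have -> : emb a * (x - emb a0) + x * (z - emb a) = x * z - emb a * emb a0 by ring.
  by [].
have Hv : forall w, w \in v -> exists a, w = emb a.
  apply: (nak Hunit Hid) => w /(nthP 0) [i]; rewrite size_mkseq => Hi <-.
  rewrite nth_mkseq //; have [a Ha] := F5 i.+1.
  have [c' [_ Hc']] := comb_cons Ha.
  exists (a + c'); move: Hc'; rewrite mulr1 embD opprD addrA.
  by [].
have Hu' : forall w, w \in u -> exists a, w = emb a.
  move=> w; rewrite inE => /orP [/eqP ->|/Hv //].
  by exists 1; rewrite emb1.
have [a Ha] := comb_inA Hu' (F1 1%N).
by exists a; rewrite -Ha expr1.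
Qed.
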